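(* Let $m\ge 2$ be an integer, let $B\subseteq m\mathbb Z$ be a finite nonempty set, and let $F\subseteq\mathbb Z$ be a finite nonempty set all of whose elements are congruent to $\tilde f$ modulo $m$, where $\tilde f\in\{1,\dots,m-1\}$. Suppose there exist an integer $n\ge1$ and sets $S_1,\dots,S_n$ with $S_1\cup\cdots\cup S_n=m\mathbb N\cup B$ such that for each $i$ there is $W_i\subseteq\mathbb Z$ with $m\mathbb Z\setminus S_i=F+W_i$. If \[m\ge \tilde f+2\tilde f\left\lfloor\frac{n}{\tilde f}\right\rfloor+\operatorname{mod}_{\tilde f}n,\] then $C=m\mathbb N\cup B\cup F$ arises as a minimal additive complement in $\mathbb Z$.
   Context: $\mathbb N=\{0,1,2,\dots\}$, $m\mathbb N=\{mk:k\in\mathbb N\}$; $\operatorname{mod}_{a}n$ denotes the remainder of $n$ upon division by $a$. For $C,W\subseteq\mathbb Z$, $C+W=\{c+w:c\in C,w\in W\}$. $C$ is a minimal additive complement (MAC) to $W$ if $C+W=\mathbb Z$ and no proper subset $C'\subsetneq C$ satisfies $C'+W=\mathbb Z$. $C$ arises as a MAC if there exists $W\subseteq\mathbb Z$ to which $C$ is a MAC. *)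

(* Defs.v *)
(* integers are Z, subsets of Z are predicates Z -> Prop,
   finite subsets of Z are given by lists (the set of their elements). *)
From Stdlib Require Export ZArith List.
Open Scope Z_scope.

Definition sumset (C W : Z -> Prop) : Z -> Prop :=
  fun z => exists c w, C c /\ W w /\ z = c + w.

Definition is_MAC (C W : Z -> Prop) : Prop :=
  (forall z, sumset C W z) /\
  forall C' : Z -> Prop,
    (forall x, C' x -> C x) -> (exists x, C x /\ ~ C' x) ->
    ~ (forall z, sumset C' W z).

Definition arises_as_MAC (C : Z -> Prop) : Prop :=
  exists W : Z -> Prop, is_MAC C W.

Definition mN (m : Z) : Z -> Prop := fun z => exists k, 0 <= k /\ z = m * k.

(* Main.v *)
Require Import Defs.
From Stdlib Require Import ZArith List Lia Classical.
Open Scope Z_scope.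
Fixpoint sumabs (l : list Z) := match l with nil => 0 | x :: r => Z.abs x + sumabs r end.
Lemma sumabs_nonneg l : 0 <= sumabs l.
Proof. induction l; simpl; lia. Qed.
Lemma sumabs_bound l x : In x l -> Z.abs x < 1 + sumabs l.
Proof. induction l as [|y l IHl]; cbn [sumabs In]; [tauto|]. pose proof (sumabs_nonneg l). intros [->|Hx]; [lia|]. specialize (IHl Hx). lia. Qed.
Lemma list_min (l : list Z) : l <> nil -> exists a, In a l /\ forall x, In x l -> a <= x.
Proof.
  induction l as [|y l IH]; [tauto|]. intros _. destruct l as [|z l'].
  - exists y. simpl. split; [auto|]. intros x [->|[]]; lia.
  - destruct IH as [a [Ha Hb]]; [discriminate|]. destruct (Z_le_gt_dec y a).
    + exists y. split; [left; auto|]. intros x [->|Hx]; [lia|]. specialize (Hb x Hx). lia.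
    + exists a. split; [right; auto|]. intros x [->|Hx]; [lia|]. auto.
Qed.
Lemma list_max (l : list Z) : l <> nil -> exists a, In a l /\ forall x, In x l -> x <= a.
Proof.
  induction l as [|y l IH]; [tauto|]. intros _. destruct l as [|z l'].
  - exists y. simpl. split; [auto|]. intros x [->|[]]; lia.
  - destruct IH as [a [Ha Hb]]; [discriminate|]. destruct (Z_le_gt_dec a y).
    + exists y. split; [left; auto|]. intros x [->|Hx]; [lia|]. specialize (Hb x Hx). lia.
    + exists a. split; [right; auto|]. intros x [->|Hx]; [lia|]. auto.
Qed.
Lemma div_small m d : 0 < m -> (m | d) -> -m < d < m -> d = 0.
Proof. intros Hm [k ->] H. destruct (Z_lt_le_dec k 0); [nia|]. destruct (Z_lt_le_dec 0 k); nia. Qed.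
Definition rr (ft i : Z) := 2*(i-1) + ft - (i-1) mod ft.
Lemma rr_bounds m ft n i : 1 <= ft -> 1 <= i <= n ->
  ft + 2 * ft * (n / ft) + n mod ft <= m -> ft <= rr ft i <= m - 1.
Proof.
  intros Hft Hi Hm. unfold rr.
  pose proof (Z.div_mod (i-1) ft ltac:(lia)) as E1.
  pose proof (Z.mod_pos_bound (i-1) ft ltac:(lia)) as B1.
  pose proof (Z.div_mod n ft ltac:(lia)) as E2.
  pose proof (Z.mod_pos_bound n ft ltac:(lia)) as B2.
  set (a := (i-1)/ft) in *. set (b := (i-1) mod ft) in *.
  set (q := n/ft) in *. set (p := n mod ft) in *.
  assert (0 <= a) by (apply Z.div_pos; lia).
  assert (0 <= ft*a) by nia.
  split; [lia|].
  destruct (Z_lt_le_dec a q).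
  - assert (ft * a <= ft * (q-1)) by (apply Z.mul_le_mono_nonneg_l; lia). lia.
  - assert (ft * q <= ft * a) by (apply Z.mul_le_mono_nonneg_l; lia).
    assert (a < q + 1).
    { destruct (Z_lt_le_dec a (q+1)); auto. assert (ft*(q+1) <= ft*a) by (apply Z.mul_le_mono_nonneg_l; lia). lia. }
    assert (a = q) by lia. subst a. lia.
Qed.
Lemma rr_inj_aux ft a b a' b' : 1 <= ft -> 0 <= b < ft -> 0 <= b' < ft ->
  2*ft*a + b = 2*ft*a' + b' -> a = a' /\ b = b'.
Proof.
  intros. destruct (Z_lt_le_dec a a').
  - assert (ft*(a+1) <= ft*a') by (apply Z.mul_le_mono_nonneg_l; lia). lia.
  - destruct (Z_lt_le_dec a' a).
    + assert (ft*(a'+1) <= ft*a) by (apply Z.mul_le_mono_nonneg_l; lia). lia.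
    + assert (a = a') by lia. subst a'. lia.
Qed.
Lemma rr_inj ft i j : 1 <= ft -> rr ft i = rr ft j -> i = j.
Proof.
  intros Hft H. unfold rr in H.
  pose proof (Z.div_mod (i-1) ft ltac:(lia)) as E1.
  pose proof (Z.mod_pos_bound (i-1) ft ltac:(lia)) as B1.
  pose proof (Z.div_mod (j-1) ft ltac:(lia)) as E2.
  pose proof (Z.mod_pos_bound (j-1) ft ltac:(lia)) as B2.
  destruct (rr_inj_aux ft ((i-1)/ft) ((i-1) mod ft) ((j-1)/ft) ((j-1) mod ft)); try lia.
Qed.
Lemma rr_nocol ft i j : 1 <= ft -> rr ft i <> rr ft j - ft.
Proof.
  intros Hft H. unfold rr in H.
  pose proof (Z.div_mod (i-1) ft ltac:(lia)) as E1.
  pose proof (Z.mod_pos_bound (i-1) ft ltac:(lia)) as B1.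
  pose proof (Z.div_mod (j-1) ft ltac:(lia)) as E2.
  pose proof (Z.mod_pos_bound (j-1) ft ltac:(lia)) as B2.
  set (a := (i-1)/ft) in *. set (b := (i-1) mod ft) in *.
  set (a' := (j-1)/ft) in *. set (b' := (j-1) mod ft) in *.
  destruct (Z_lt_le_dec a a').
  - assert (ft*(a+1) <= ft*a') by (apply Z.mul_le_mono_nonneg_l; lia). lia.
  - assert (ft*a' <= ft*a) by (apply Z.mul_le_mono_nonneg_l; lia). lia.
Qed.

Ltac dv := first [assumption | apply Z.divide_sub_r; dv | apply Z.divide_add_r; dv | apply (proj2 (Z.divide_opp_r _ _)); dv].

Theorem theorem4 (m ft n : Z) (B F : list Z) (S : Z -> Z -> Prop) :
  2 <= m ->
  B <> nil -> (forall b, In b B -> (m | b)) ->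
  1 <= ft <= m - 1 ->
  F <> nil -> (forall f, In f F -> f mod m = ft) ->
  1 <= n ->
  (forall z, (exists i, 1 <= i <= n /\ S i z) <-> (mN m z \/ In z B)) ->
  (forall i, 1 <= i <= n ->
     exists W : Z -> Prop,
       forall z, ((m | z) /\ ~ S i z) <-> sumset (fun f => In f F) W z) ->
  ft + 2 * ft * (n / ft) + n mod ft <= m ->
  arises_as_MAC (fun z => mN m z \/ In z B \/ In z F).
Proof.
  intros Hm HBn HBd Hft HFn HFm Hn Hcov HW Hmn.
  set (K := 1 + sumabs F + sumabs B).
  pose proof (sumabs_nonneg F). pose proof (sumabs_nonneg B).
  assert (HK : 1 <= K) by (unfold K; lia).
  assert (HFb : forall f, In f F -> -K < f < K).
  { intros f Hf. pose proof (sumabs_bound F f Hf). unfold K. lia. }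
  assert (HAgt : forall z, mN m z \/ In z B -> -K < z).
  { intros z [[k [Hk ->]]|Hz]; [nia|]. pose proof (sumabs_bound B z Hz). unfold K. lia. }
  assert (HAd : forall z, mN m z \/ In z B -> (m | z)).
  { intros z [[k [Hk ->]]|Hz]; [exists k; ring|auto]. }
  assert (HFd : forall f, In f F -> (m | f - ft)).
  { intros f Hf. pose proof (Z.div_mod f m ltac:(lia)). rewrite (HFm f Hf) in H1.
    exists (f/m). lia. }
  assert (HSA : forall i z, 1 <= i <= n -> S i z -> mN m z \/ In z B).
  { intros i z Hi Hs. apply Hcov. eauto. }
  set (P := 8*K*m). set (T := -m*(8*K*K + 6*K)).
  assert (HP : 16*K <= P) by (unfold P; nia).
  set (Zs := fun u => exists g, In g F /\ u = P*g + T).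
  assert (HZb : forall u, Zs u -> u <= -14*K).
  { intros u [g [Hg ->]]. pose proof (HFb g Hg). unfold P, T.
    assert (K*m*g <= K*m*(K-1)) by (apply Z.mul_le_mono_nonneg_l; nia). nia. }
  assert (HPd : forall g, (m | P*g + T)).
  { intros g. exists (8*K*g - (8*K*K+6*K)). unfold P, T. ring. }
  set (Y := fun i v => (forall f, In f F -> (m | f + v) /\ ~ S i (f + v) /\ ~ Zs (f + v))
                       \/ (exists g, In g F /\ v = P*g + T - g)).
  assert (Ysound : forall i v f, 1 <= i <= n -> Y i v -> In f F -> (m | f + v) /\ ~ S i (f + v)).
  { intros i v f Hi [Hg|[g [Hg ->]]] Hf.
    - destruct (Hg f Hf) as [? [? ?]]. auto.
    - split.
      + replace (f + (P*g + T - g)) with ((P*g+T) + ((f - ft) - (g - ft))) by ring.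
        apply Z.divide_add_r; [auto|]. apply Z.divide_sub_r; auto.
      + intro Hs. apply HSA in Hs; auto. apply HAgt in Hs.
        pose proof (HZb (P*g+T) ltac:(exists g; auto)). pose proof (HFb f Hf). pose proof (HFb g Hg). lia. }
  assert (Ydiv : forall i v, 1 <= i <= n -> Y i v -> (m | v + ft)).
  { intros i v Hi Hy. destruct F as [|f0 F']; [congruence|].
    destruct (Ysound i v f0 Hi Hy (or_introl eq_refl)) as [Hd _].
    replace (v + ft) with ((f0 + v) - (f0 - ft)) by ring.
    apply Z.divide_sub_r; auto. apply HFd. left; auto. }
  assert (Havoid : forall y, ~ Zs y -> exists f, In f F /\ forall f', In f' F -> ~ Zs (y - f + f')).
  { intros y Hy. destruct (list_min F HFn) as [fmin [Hmin1 Hmin2]].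
    destruct (list_max F HFn) as [fmax [Hmax1 Hmax2]].
    destruct (classic (exists f', In f' F /\ Zs (y - fmin + f'))) as [[f' [Hf' [g [Hg Hz]]]]|Hno].
    - exists fmax. split; auto. intros f'' Hf'' [h [Hh Hz']].
      pose proof (Hmin2 f' Hf'). pose proof (Hmax2 f'' Hf'').
      pose proof (Hmax2 f' Hf'). pose proof (Hmin2 f'' Hf'').
      pose proof (HFb fmin Hmin1). pose proof (HFb fmax Hmax1).
      assert (E : P*(g-h) = f' - fmin + fmax - f'') by lia.
      assert (g = h).
      { destruct (Z_lt_le_dec (g-h) 0).
        - assert (P*(g-h) <= P*(-1)) by (apply Z.mul_le_mono_nonneg_l; unfold P; nia). lia.
        - destruct (Z_lt_le_dec 0 (g-h)); [|lia].
          assert (P*1 <= P*(g-h)) by (apply Z.mul_le_mono_nonneg_l; unfold P; nia). lia. }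
      subst h. apply Hy. exists g. split; auto. lia.
    - exists fmin. split; auto. intros f' Hf' Hz. apply Hno. eauto. }
  assert (Ycover : forall i y, 1 <= i <= n -> (m | y) -> ~ S i y -> exists f v, In f F /\ Y i v /\ y = f + v).
  { intros i y Hi Hy Hs. destruct (classic (Zs y)) as [[g [Hg ->]]|nZ].
    - exists g, (P*g+T-g). split; auto. split; [right; eauto|ring].
    - destruct (Z_lt_le_dec (-3*K-1) y).
      + destruct (HW i Hi) as [Wi HWi].
        destruct (proj1 (HWi y) (conj Hy Hs)) as [f [w [Hf [Hw ->]]]].
        exists f, w. split; auto. split; auto. left. intros f'' Hf''.
        destruct (proj2 (HWi (f''+w))) as [Hd Hs']. { exists f'', w. auto. }
        split; auto. split; auto. intro Hz. apply HZb in Hz.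
        pose proof (HFb f Hf). pose proof (HFb f'' Hf''). lia.
      + destruct (Havoid y nZ) as [f [Hf Hf']]. exists f, (y - f). split; auto. split; [|ring].
        left. intros f' Hf'1. split; [|split].
        * replace (f' + (y - f)) with (y + (f' - ft) - (f - ft)) by ring.
          apply Z.divide_sub_r; [apply Z.divide_add_r|]; auto.
        * intro Hs'. apply HSA in Hs'; auto. apply HAgt in Hs'.
          pose proof (HFb f Hf). pose proof (HFb f' Hf'1). lia.
        * replace (f' + (y - f)) with (y - f + f') by ring. auto. }
  assert (Yuniq : forall i v c x, Y i v -> In c F -> In x F -> P*x + T = c + v -> c = x).
  { intros i v c x [Hg|[g [Hg ->]]] Hc Hx E.
    - exfalso. destruct (Hg c Hc) as [_ [_ Hz]]. apply Hz. exists x. split; auto.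
    - pose proof (HFb c Hc). pose proof (HFb g Hg). pose proof (HFb x Hx).
      assert (E2 : P*(x-g) = c - g) by lia.
      assert (x = g).
      { destruct (Z_lt_le_dec (x-g) 0).
        - assert (P*(x-g) <= P*(-1)) by (apply Z.mul_le_mono_nonneg_l; unfold P; nia). lia.
        - destruct (Z_lt_le_dec 0 (x-g)); [|lia].
          assert (P*1 <= P*(x-g)) by (apply Z.mul_le_mono_nonneg_l; unfold P; nia). lia. }
      lia. }
  assert (Hrb : forall i, 1 <= i <= n -> ft <= rr ft i <= m - 1).
  { intros i Hi. apply (rr_bounds m ft n i); lia. }
  assert (R1 : forall i j, 1 <= i <= n -> 1 <= j <= n -> (m | rr ft i - rr ft j) -> i = j).
  { intros i j Hi Hj Hd. apply (rr_inj ft); [lia|].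
    pose proof (Hrb i Hi). pose proof (Hrb j Hj).
    pose proof (div_small m _ ltac:(lia) Hd ltac:(lia)). lia. }
  assert (R2 : forall i j, 1 <= i <= n -> 1 <= j <= n -> ~ (m | rr ft i - rr ft j + ft)).
  { intros i j Hi Hj Hd. 
    pose proof (Hrb i Hi). pose proof (Hrb j Hj).
    pose proof (div_small m _ ltac:(lia) Hd ltac:(lia)). apply (rr_nocol ft i j); lia. }
  set (W := fun w => (exists i, 1 <= i <= n /\ w = rr ft i)
                  \/ (exists i, 1 <= i <= n /\ Y i (w - rr ft i))
                  \/ (forall i, 1 <= i <= n -> ~ (m | w - rr ft i) /\ ~ (m | w - rr ft i + ft))).
  exists W. split.
  -
    intro z.
    destruct (classic (exists i, 1 <= i <= n /\ (m | z - rr ft i))) as [[i [Hi Hd]]|H1].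
    + destruct (classic (S i (z - rr ft i))) as [Hs|Hs].
      * exists (z - rr ft i), (rr ft i). split; [|split; [left; eauto|ring]].
        destruct (HSA i _ Hi Hs); auto.
      * destruct (Ycover i _ Hi Hd Hs) as [f [v [Hf [Hv E]]]].
        exists f, (rr ft i + v). split; [auto|]. split; [|lia].
        right; left. exists i. split; auto. replace (rr ft i + v - rr ft i) with v by ring. auto.
    + destruct (classic (exists i, 1 <= i <= n /\ (m | z - rr ft i + ft))) as [[i [Hi Hd]]|H2].
      * set (y := m * (-(Z.abs z + 2*K + m))).
        assert (Hyb : y <= -(Z.abs z + 2*K + m)) by (unfold y; nia).
        assert (Hyd : (m | y)) by (exists (-(Z.abs z + 2*K + m)); unfold y; ring).
        assert (Hys : ~ S i y).
        { intro Hs. apply HSA in Hs; auto. apply HAgt in Hs. lia. }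
        destruct (Ycover i y Hi Hyd Hys) as [f [v [Hf [Hv E]]]].
        pose proof (HFb f Hf). pose proof (Hrb i Hi).
        pose proof (Ydiv i v Hi Hv) as Hvd.
        exists (z - rr ft i - v), (rr ft i + v). split; [|split; [|ring]].
        -- left. assert (Hcd : (m | z - rr ft i - v)).
           { replace (z - rr ft i - v) with ((z - rr ft i + ft) - (v + ft)) by ring.
             apply Z.divide_sub_r; auto. }
           destruct Hcd as [k Hk]. exists k. split; [|lia].
           assert (0 <= z - rr ft i - v) by lia. nia.
        -- right; left. exists i. split; auto. replace (rr ft i + v - rr ft i) with v by ring. auto.
      * exists 0, z. split; [left; exists 0; split; lia|]. split; [|ring].
        right; right. intros i Hi. split; intro Hd; [apply H1|apply H2]; eauto.
  -
    intros C' HC' [x [Cx nC'x]] Hall.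
    assert (HA1 : forall c, C' c -> ((mN m c \/ In c B) /\ (m | c) /\ -K < c) \/ (In c F /\ (m | c - ft))).
    { intros c Hc. destruct (HC' c Hc) as [Hq|[Hq|Hq]].
      - left. split; [auto|]. split; [apply HAd|apply HAgt]; auto.
      - left. split; [auto|]. split; [apply HAd|apply HAgt]; auto.
      - right. split; auto. }
    destruct (classic (mN m x \/ In x B)) as [HAx|HnA].
    + destruct (proj2 (Hcov x) HAx) as [i [Hi Hsx]].
      pose proof (HAd x HAx) as Hxd.
      destruct (Hall (x + rr ft i)) as [c [w [Hc [Hw Hz]]]].
      destruct (HA1 c Hc) as [[_ [Hcd _]]|[HcF Hcd]];
      (destruct Hw as [[j [Hj ->]]|[[j [Hj Hy]]|H3]];
      [ idtac
      | pose proof (Ydiv j _ Hj Hy) as Hvd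
      | destruct (H3 i Hi) as [H3a H3b] ]).
      * assert (j = i).
        { apply R1; auto. replace (rr ft j - rr ft i) with (x - c) by lia. dv. }
        subst j. assert (c = x) by lia. subst. contradiction.
      * apply (R2 i j Hi Hj). replace (rr ft i - rr ft j + ft) with ((w - rr ft j + ft) - (x - c)) by lia. dv.
      * apply H3a. replace (w - rr ft i) with (x - c) by lia. dv.
      * apply (R2 j i Hj Hi). replace (rr ft j - rr ft i + ft) with (x - (c - ft)) by lia. dv.
      * assert (j = i).
        { apply R1; auto. replace (rr ft j - rr ft i) with (x - (c - ft) - (w - rr ft j + ft)) by lia. dv. }
        subst j. destruct (Ysound i (w - rr ft i) c Hi Hy HcF) as [_ Hns].
        apply Hns. replace (c + (w - rr ft i)) with x by lia. auto.
      * apply H3b. replace (w - rr ft i + ft) with (x - (c - ft)) by lia. dv.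
    + destruct Cx as [Ax|[Ax|Fx]]; [exfalso; auto|exfalso; auto|].
      assert (H1n : 1 <= 1 <= n) by lia.
      pose proof (HPd x) as Hxd.
      assert (HZx : P*x + T <= -14*K) by (apply HZb; exists x; auto).
      destruct (Hall (rr ft 1 + (P*x + T))) as [c [w [Hc [Hw Hz]]]].
      destruct (HA1 c Hc) as [[_ [Hcd Hcg]]|[HcF Hcd]];
      (destruct Hw as [[j [Hj ->]]|[[j [Hj Hy]]|H3]];
      [ idtac
      | pose proof (Ydiv j _ Hj Hy) as Hvd
      | destruct (H3 1 H1n) as [H3a H3b] ]).
      * assert (j = 1).
        { apply R1; auto. replace (rr ft j - rr ft 1) with ((P*x+T) - c) by lia. dv. }
        subst j. lia.
      * apply (R2 1 j H1n Hj). replace (rr ft 1 - rr ft j + ft) with ((w - rr ft j + ft) + c - (P*x+T)) by lia. dv.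
      * apply H3a. replace (w - rr ft 1) with ((P*x+T) - c) by lia. dv.
      * apply (R2 j 1 Hj H1n). replace (rr ft j - rr ft 1 + ft) with ((P*x+T) - (c - ft)) by lia. dv.
      * assert (j = 1).
        { apply R1; auto. replace (rr ft j - rr ft 1) with ((P*x+T) - (c - ft) - (w - rr ft j + ft)) by lia. dv. }
        subst j. assert (c = x) by (apply (Yuniq 1 (w - rr ft 1) c x Hy HcF Fx); lia).
        subst. contradiction.
      * apply H3b. replace (w - rr ft 1 + ft) with ((P*x+T) - (c - ft)) by lia. dv.
Qed.
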